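(* Let $D$ be a positive integer that is not a perfect square, and let $L_j$ ($j\in\mathbb{Z}$) be the simple equivalence matrices of the principal cycle of determinant $D$. Then: (i) For $j>0$ the entries of $L_j$ have the (weak) sign patterns $\begin{pmatrix}+&+\\+&+\end{pmatrix}$, $\begin{pmatrix}-&+\\-&+\end{pmatrix}$, $\begin{pmatrix}-&-\\-&-\end{pmatrix}$, $\begin{pmatrix}+&-\\+&-\end{pmatrix}$ according as $j\equiv0,1,2,3\pmod 4$, where $+$ means the entry is $\ge0$ and $-$ means it is $\le0$. (ii) For $j>0$, $|L_j|=|S^{(1)}|\cdots|S^{(j)}|$ and $|L_{-j}|=|S^{(-j)}|\cdots|S^{(-1)}|$. (iii) For every integer $j$ with $|j|\ge2$, writing $L_j=(l_{ik})$, we have $1\le \dfrac{\max_{i,k}|l_{ik}|}{\min_{i,k}|l_{ik}|}\le 4(D+\sqrt D)$.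
   Context: Forms: $Q=[a,2b,c]$ means $ax_1^2+2bx_1x_2+cx_2^2$ ($a,b,c\in\mathbb{Z}$), with matrix $\begin{pmatrix} a&b\\ b&c\end{pmatrix}$ and determinant $b^2-ac$. A form of determinant $D$ is reduced if $0<b<\sqrt D$ and $\sqrt D-b<|a|<\sqrt D+b$. The reduced identity form is $\tilde I=[1,2\lambda,\lambda^2-D]$, $\lambda=\lfloor\sqrt D\rfloor$. For a reduced form $Q_1=[a_1,2b_1,c_1]$, let $S=\begin{pmatrix}0&1\\-1&\mu\end{pmatrix}$ where $\mu$ is the integer with $-\sqrt D-b_1<\mu c_1<-\sqrt D-b_1+|c_1|$; the right neighbor of $Q_1$ is the reduced form $S^tQ_1S$. Put $Q^{(0)}=\tilde I$, let $Q^{(j)}$ be the right neighbor of $Q^{(j-1)}$ and $S^{(j)}$ the matrix $S$ taking $Q^{(j-1)}$ to $Q^{(j)}$ ($j\ge1$). The sequence $Q^{(j)}$ is periodic with least period $2p$. For $j\ge1$, $L_j=S^{(1)}\cdots S^{(j)}$, and $L_0$ is the identity. For negative $j$, $S^{(j)}=(S^{(j_0)})^{-1}$ where $j\equiv j_0\pmod{2p}$, $0<j_0\le 2p$, and for $j>0$, $L_{-j}=S^{(-j)}\cdots S^{(-1)}$. For a matrix $M=(m_{ik})$, $|M|=(|m_{ik}|)$ denotes the entrywise absolute value. *)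

(* Defs.v *)
From HB Require Import structures.
From mathcomp Require Import all_boot all_order all_algebra.
From mathcomp Require Import Rstruct.
Set Implicit Arguments. Unset Strict Implicit. Unset Printing Implicit Defensive.
Import Order.TTheory GRing.Theory Num.Theory.
Local Open Scope ring_scope.

Definition sqrtD (D : nat) : Rdefinitions.R := Num.sqrt (D%:R : Rdefinitions.R).

Definition lam (D : nat) : int := Num.floor (sqrtD D).

(* A binary form [a,2b,c] is represented by its matrix ((a,b),(b,c)). *)
Definition form_of (a b c : int) : 'M[int]_2 :=
  \matrix_(i < 2, k < 2)
    (if (i == 0) && (k == 0) then a else if (i == 1) && (k == 1) then c else b).

Definition Itilde (D : nat) : 'M[int]_2 :=
  form_of 1 (lam D) (lam D ^+ 2 - D%:Z).

Definition Smat (mu : int) : 'M[int]_2 :=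
  \matrix_(i < 2, k < 2)
    (if (i == 0) && (k == 0) then 0 else if (i == 0) then 1
     else if (k == 0) then -1 else mu).

Definition mu_cond (D : nat) (Q1 : 'M[int]_2) (mu : int) : Prop :=
  let b1 : Rdefinitions.R := (Q1 0 1)%:~R in
  let c1 : Rdefinitions.R := (Q1 1 1)%:~R in
  - sqrtD D - b1 < mu%:~R * c1 /\ mu%:~R * c1 < - sqrtD D - b1 + `|c1|.

(* (Q, mu) describe the principal cycle: Q 0 = Itilde, and Q j is the right
   neighbour of Q (j-1), obtained with S^(j) = Smat (mu j), for j >= 1. *)
Definition principal_cycle (D : nat) (Q : nat -> 'M[int]_2) (mu : nat -> int)
  : Prop :=
  Q 0%N = Itilde D /\
  forall j : nat, (0 < j)%N ->
    mu_cond D (Q j.-1) (mu j) /\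
    Q j = (Smat (mu j))^T *m Q j.-1 *m Smat (mu j).

Definition least_period (Q : nat -> 'M[int]_2) (N : nat) : Prop :=
  (0 < N)%N /\ (forall j, Q (j + N)%N = Q j) /\
  (forall M, (0 < M)%N -> (forall j, Q (j + M)%N = Q j) -> (N <= M)%N).

(* S^(j) for j in Z (j <> 0): for j > 0 it is Smat (mu j); for j <= 0 it is
   the inverse of S^(j0), j0 = j mod N with 0 < j0 <= N. *)
Definition Sz (mu : nat -> int) (N : nat) (j : int) : 'M[int]_2 :=
  if 0 < j then Smat (mu (absz j))
  else invmx (Smat (mu (absz (((j - 1) %% N%:Z)%Z + 1)))).

Definition Lz (mu : nat -> int) (N : nat) (j : int) : 'M[int]_2 :=
  if 0 < j then \prod_(i <- iota 1 (absz j)) Sz mu N i%:Z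
  else if j == 0 then 1
  else \prod_(i <- rev (iota 1 (absz j))) Sz mu N (- i%:Z).

Definition absmx (M : 'M[int]_2) : 'M[int]_2 := map_mx (fun x => `|x|) M.

Definition maxabs (M : 'M[int]_2) : int :=
  Num.max (Num.max `|M 0 0| `|M 0 1|) (Num.max `|M 1 0| `|M 1 1|).
Definition minabs (M : 'M[int]_2) : int :=
  Num.min (Num.min `|M 0 0| `|M 0 1|) (Num.min `|M 1 0| `|M 1 1|).

(* Main.v *)
Require Import Defs.
From HB Require Import structures.
From mathcomp Require Import all_boot all_order all_algebra.
From mathcomp Require Import Rstruct.
From mathcomp Require Import lra zify ring.
Import Order.TTheory GRing.Theory Num.Theory.
Local Open Scope ring_scope.


Lemma ord2 (i : 'I_2) : i = 0 \/ i = 1.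
Proof.
case: i => [[|[|n]] Hn]; first by left; apply: val_inj.
  by right; apply: val_inj.
by [].
Qed.

Lemma mx2P (A B : 'M[int]_2) : A 0 0 = B 0 0 -> A 0 1 = B 0 1 ->
  A 1 0 = B 1 0 -> A 1 1 = B 1 1 -> A = B.
Proof.
move=> h1 h2 h3 h4; apply/matrixP => i k.
by case: (ord2 i) => ->; case: (ord2 k) => ->.
Qed.

Lemma mul2E (A B : 'M[int]_2) i k :
  (A *m B) i k = A i 0 * B 0 k + A i 1 * B 1 k.
Proof.
rewrite mxE !big_ord_recl big_ord0 addr0.
by congr (_ * _ + _ * _); congr (_ _ _); apply: val_inj.
Qed.

Lemma SmatE mu : [/\ Smat mu 0 0 = 0, Smat mu 0 1 = 1, Smat mu 1 0 = -1
  & Smat mu 1 1 = mu].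
Proof. by rewrite !mxE. Qed.

Lemma formE a b c : [/\ form_of a b c 0 0 = a, form_of a b c 0 1 = b,
  form_of a b c 1 0 = b & form_of a b c 1 1 = c].
Proof. by rewrite !mxE. Qed.

Lemma absmxE (M : 'M[int]_2) i k : absmx M i k = `|M i k|.
Proof. by rewrite mxE. Qed.

Lemma trE (M : 'M[int]_2) i k : M^T i k = M k i.
Proof. by rewrite mxE. Qed.
Lemma step_real (s A B C M : Rdefinitions.R) :
  0 <= s -> 0 < B -> B < s -> s - B < `|A| -> `|A| < s + B -> B^+2 - A*C = s^+2 ->
  -s - B < M*C -> M*C < -s - B + `|C| ->
  (M <= -2 \/ M = -1 \/ 0 <= M) -> (M <= 0 \/ M = 1 \/ 2 <= M) ->
  (0 < -B - M*C /\ -B - M*C < s /\ s - (-B - M*C) < `|C| /\ `|C| < s + (-B - M*C))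
  /\ A*C < 0 /\ M*C < 0.
Proof.
move=> s0 B0 Bs h1 h2 det m1 m2 i1 i2.
have AC : A * C < 0 by nra.
have [C0|C0] : C < 0 \/ 0 < C.
  have [C0|C0|C0] := ltgtP C 0; [by left|by right|].
  by move: AC; rewrite C0 mulr0 ltxx.
- have A0 : 0 < A by nra.
  rewrite (ltr0_norm C0) in m2 *; rewrite (gtr0_norm A0) in h1 h2.
  have Cl : s - B < - C by nra.
  have Cu : - C < s + B by nra.
  have MC : M * C < 0 by lra.
  have [Cs|Cs] : - C <= s \/ s < - C by case: (lerP (- C) s); [left|right].
    do ?split => //; lra.
  case: i2 => [M0|[M1|M2]].
  + nra.
  + subst M; do ?split => //; lra.
  + nra.
- have A0 : A < 0 by nra.
  rewrite (gtr0_norm C0) in m2 *; rewrite (ltr0_norm A0) in h1 h2.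
  have Cl : s - B < C by nra.
  have Cu : C < s + B by nra.
  have MC : M * C < 0 by lra.
  have [Cs|Cs] : C <= s \/ s < C by case: (lerP C s); [left|right].
    do ?split => //; lra.
  case: i1 => [M0|[M1|M2]].
  + nra.
  + subst M; do ?split => //; lra.
  + nra.
Qed.
Lemma sfacts D : (0 < D)%N -> (forall m : nat, (m ^ 2)%N != D) ->
  0 <= sqrtD D /\ sqrtD D ^+ 2 = (D%:Z)%:~R /\ 1 <= lam D /\
  ((lam D)%:~R < sqrtD D) /\ (sqrtD D < (lam D + 1)%:~R) /\ (lam D ^+ 2 < D%:Z).
Proof.
move=> D0 nsq.
have s0 : 0 <= sqrtD D by rewrite /sqrtD sqrtr_ge0.
have s2 : sqrtD D ^+ 2 = (D%:Z)%:~R by rewrite /sqrtD sqr_sqrtr // ler0n.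
have /andP [fl fu] := floor_itv (sqrtD D).
have D1 : (1 : Rdefinitions.R) <= (D%:Z)%:~R.
  by change ((1 : Rdefinitions.R) <= D%:R); rewrite ler1n.
have s1 : 1 <= sqrtD D by nra.
have l1 : 1 <= lam D by rewrite /lam floor_ge_int.
have l2le : lam D ^+ 2 <= D%:Z.
  rewrite -(ler_int Rdefinitions.R) intrM.
  have : (0 : Rdefinitions.R) <= (lam D)%:~R by rewrite ler0z; lia.
  rewrite /lam in fl * => h; nra.
have l2 : lam D ^+ 2 < D%:Z.
  rewrite lt_neqAle l2le andbT; apply/negP => /eqP E.
  move/eqP: (nsq `|lam D|%N); apply.
  have : (`|lam D| ^ 2)%:Z = D%:Z by move: E; rewrite expr2 expnS expn1; nia.
  by case.
split => //; split => //; split => //; split => //.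
have : (lam D ^+ 2)%:~R < (D%:Z)%:~R :> Rdefinitions.R by rewrite ltr_int.
have : (0 : Rdefinitions.R) <= (lam D)%:~R by rewrite ler0z; lia.
rewrite intrM -s2 => h1 h2; nra.
Qed.

Lemma mu_bound (m c b l : int) : m*c < 0 -> -(m*c) < l+1+b -> b < l+1 ->
  (0 < c -> -(2 * l) <= m <= -1) /\ (c < 0 -> 1 <= m <= 2 * l).
Proof.
move=> h1 h2 h3; split=> c0; apply/andP; split; nia.
Qed.
Lemma int_cases1 (m : int) : m <= -2 \/ m = -1 \/ 0 <= m.
Proof. lia. Qed.
Lemma int_cases2 (m : int) : m <= 0 \/ m = 1 \/ 2 <= m.
Proof. lia. Qed.


Definition red_inv D (M : 'M[int]_2) (j : nat) : Prop :=
  M 1 0 = M 0 1 /\ 0 < M 0 1 /\ (M 0 1)%:~R < sqrtD D /\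
  sqrtD D - (M 0 1)%:~R < `|(M 0 0)%:~R| /\ `|(M 0 0)%:~R| < sqrtD D + (M 0 1)%:~R /\
  M 0 1 ^+ 2 - M 0 0 * M 1 1 = D%:Z /\ (if odd j then M 0 0 < 0 else 0 < M 0 0).

Lemma STMS (M : 'M[int]_2) mu : let M' := (Smat mu)^T *m M *m Smat mu in
 M' 0 0 = M 1 1 /\ M' 0 1 = - M 1 0 - mu * M 1 1 /\ M' 1 0 = - M 0 1 - mu * M 1 1 /\
 M' 1 1 = M 0 0 + mu * M 0 1 + mu * M 1 0 + mu ^+ 2 * M 1 1.
Proof.
rewrite /= !mul2E !trE; have [e1 e2 e3 e4] := SmatE mu; rewrite e1 e2 e3 e4.
by split; [|split; [|split]]; ring.
Qed.

Lemma step_inv D (M : 'M[int]_2) m j : (0 < D)%N -> (forall k : nat, (k ^ 2)%N != D) ->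
  red_inv D M j -> mu_cond D M m ->
  red_inv D ((Smat m)^T *m M *m Smat m) j.+1 /\
  (if odd j.+1 then 1 <= m <= 2 * lam D else - (2 * lam D) <= m <= -1).
Proof.
move=> D0 nsq [sym [b0 [bs [h1 [h2 [det sg]]]]]] [m1 m2].
have [s0 [s2 [l1 [ls [sl l2]]]]] := sfacts _ D0 nsq.
have [e1 [e2 [e3 e4]]] := STMS M m.
rewrite /= in e1 e2 e3 e4.
set a := M 0 0 in h1 h2 det sg e4 *.
set b := M 0 1 in sym b0 bs h1 h2 det e3 e4 m1 m2 *.
set c := M 1 1 in det e1 e2 e3 e4 m1 m2 *.
rewrite sym in e2 e4.
have i1 : (m%:~R : Rdefinitions.R) <= -2 \/ (m%:~R : Rdefinitions.R) = -1 \/ 0 <= (m%:~R : Rdefinitions.R).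
  case: (int_cases1 m) => [h|[h|h]]; [left|right;left|right;right].
  - by rewrite -(ler_int Rdefinitions.R) in h.
  - by rewrite h.
  - by rewrite ler0z.
have i2 : (m%:~R : Rdefinitions.R) <= 0 \/ (m%:~R : Rdefinitions.R) = 1 \/ 2 <= (m%:~R : Rdefinitions.R).
  case: (int_cases2 m) => [h|[h|h]]; [left|right;left|right;right].
  - by rewrite lerz0.
  - by rewrite h.
  - by rewrite -(ler_int Rdefinitions.R) in h.
have detR : (b%:~R : Rdefinitions.R) ^+ 2 - a%:~R * c%:~R = sqrtD D ^+ 2.
  by rewrite s2 -det intrB intrM !expr2 intrM.
have [[r1 [r2 [r3 r4]]] [r5 r6]] := @step_real (sqrtD D) a%:~R b%:~R c%:~R m%:~R s0 ltac:(by rewrite ltr0z) bs h1 h2 detR m1 m2 i1 i2.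
have eb : ((-b - m*c)%:~R : Rdefinitions.R) = - b%:~R - m%:~R * c%:~R.
  by rewrite intrB intrN intrM.
have ac : a * c < 0 by rewrite -(ltrz0 Rdefinitions.R) intrM.
have mc : m * c < 0 by rewrite -(ltrz0 Rdefinitions.R) intrM.
have bl : b < lam D + 1.
  by rewrite -(ltr_int Rdefinitions.R); apply: lt_trans bs sl.
have mcl : - (m * c) < lam D + 1 + b.
  rewrite -(ltr_int Rdefinitions.R) intrN intrM !intrD.
  move: sl; rewrite intrD => sl; lra.
split.
  rewrite /red_inv e1 e2 e3 e4 eb.
  split => //; split; first by rewrite -(ltr0z Rdefinitions.R) eb.
  do 3! (split => //).
  split; first by rewrite -det; ring.
  rewrite /=; case: (odd j) sg => /= sg.
    rewrite ltNge; apply/negP => hc; move: ac; rewrite ltNge mulr_le0 // ltW //.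
  rewrite ltNge; apply/negP => hc; move: ac; rewrite ltNge mulr_ge0 // ltW //.
have [mb1 mb2] := @mu_bound m c b (lam D) mc mcl bl.
rewrite /=; case: (odd j) sg => /= sg.
  apply: mb1; rewrite ltNge; apply/negP => hc; move: ac; rewrite ltNge mulr_le0 // ltW //.
apply: mb2; rewrite ltNge; apply/negP => hc; move: ac; rewrite ltNge mulr_ge0 // ltW //.
Qed.


Lemma all_inv D Q mu : (0 < D)%N -> (forall k : nat, (k ^ 2)%N != D) ->
  principal_cycle D Q mu -> forall j, red_inv D (Q j) j /\
  (if odd j.+1 then 1 <= mu j.+1 <= 2 * lam D else - (2 * lam D) <= mu j.+1 <= -1).
Proof.
move=> D0 nsq [Q0 PC].
have base : red_inv D (Q 0%N) 0.
  have [s0 [s2 [l1 [ls [sl l2]]]]] := sfacts _ D0 nsq.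
  rewrite Q0 /Itilde; have [f1 f2 f3 f4] := formE 1 (lam D) (lam D ^+ 2 - D%:Z).
  rewrite /red_inv f1 f2 f3 f4; split => //; split; first by lia.
  split => //.
  have -> : `|(1 : int)%:~R| = 1 :> Rdefinitions.R by rewrite normr1.
  move: sl; rewrite intrD => sl.
  have : (1 : Rdefinitions.R) <= (lam D)%:~R by rewrite ler1z.
  move=> h; split; first by lra.
  split; first by lra.
  by split => //; rewrite mul1r; ring.
have step : forall j, red_inv D (Q j) j -> red_inv D (Q j.+1) j.+1 /\
  (if odd j.+1 then 1 <= mu j.+1 <= 2 * lam D else - (2 * lam D) <= mu j.+1 <= -1).
  move=> j h; have [mc eq] := PC j.+1 isT; rewrite eq /=.
  exact: step_inv.
elim => [|j [IH _]]; first by split => //; have [] := step 0%N base.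
split; first by have [] := step j IH.
by have [h _] := step j IH; have [] := step j.+1 h.
Qed.

Lemma mu_facts D Q mu : (0 < D)%N -> (forall k : nat, (k ^ 2)%N != D) ->
  principal_cycle D Q mu -> forall k, (0 < k)%N ->
  if odd k then 1 <= mu k <= 2 * lam D else - (2 * lam D) <= mu k <= -1.
Proof.
move=> D0 nsq PC [|k] // _.
by have [] := all_inv _ _ _ D0 nsq PC k.
Qed.

Lemma N_even D Q mu N : (0 < D)%N -> (forall k : nat, (k ^ 2)%N != D) ->
  principal_cycle D Q mu -> least_period Q N -> ~~ odd N.
Proof.
move=> D0 nsq PC [N0 [per _]].
have [[_ [_ [_ [_ [_ [_ sg]]]]]] _] := all_inv _ _ _ D0 nsq PC N.
have := per 0%N; rewrite add0n => E.
move: sg; rewrite E; case: PC => -> _.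
have [f1 _ _ _] := formE 1 (lam D) (lam D ^+ 2 - D%:Z).
rewrite /Itilde f1; by case: (odd N).
Qed.


Definition dg (a b : int) : 'M[int]_2 := form_of a 0 b.
Definition rotp (p : int * int) := (- p.2, p.1).
Definition sgv (v : int * int) (j : nat) := iter j rotp v.
Definition Sinv (m : int) : 'M[int]_2 :=
  \matrix_(i < 2, k < 2)
    (if (i == 0) && (k == 0) then m else if (i == 0) then -1
     else if (k == 0) then 1 else 0).

Lemma SinvE m : [/\ Sinv m 0 0 = m, Sinv m 0 1 = -1, Sinv m 1 0 = 1
  & Sinv m 1 1 = 0].
Proof. by rewrite !mxE. Qed.

Lemma oneE : [/\ (1 : 'M[int]_2) 0 0 = 1, (1 : 'M[int]_2) 0 1 = 0,
  (1 : 'M[int]_2) 1 0 = 0 & (1 : 'M[int]_2) 1 1 = 1].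
Proof. by rewrite !mxE. Qed.

Lemma sgv_norm v j : `|v.1| = 1 -> `|v.2| = 1 ->
  `|(sgv v j).1| = 1 /\ `|(sgv v j).2| = 1.
Proof.
move=> h1 h2; elim: j => [|j [i1 i2]] //.
by split; rewrite /sgv iterS /= ?normrN; [exact: i2|exact: i1].
Qed.

Lemma sgv_prod v j : (sgv v j).1 * (sgv v j).2 = (-1) ^+ j * (v.1 * v.2).
Proof.
elim: j => [|j IH]; first by rewrite expr0 mul1r.
rewrite exprS mulN1r mulNr -IH.
by rewrite /sgv iterS /=; ring.
Qed.

Lemma invSmat m : invmx (Smat m) = Sinv m.
Proof.
have E : Smat m *m Sinv m = 1%:M.
  apply: mx2P; rewrite !mul2E; have [a1 a2 a3 a4] := SmatE m;
  have [b1 b2 b3 b4] := SinvE m; rewrite ?a1 ?a2 ?a3 ?a4 ?b1 ?b2 ?b3 ?b4 !mxE /=; ring.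
have [U _] := mulmx1_unit E.
by rewrite -[RHS]mul1mx -(mulVmx U) -mulmxA E mulmx1.
Qed.

Lemma pos_step a b m : `|a| = 1 -> `|b| = 1 -> m = a * b * `|m| ->
  dg a b *m Smat m = absmx (Smat m) *m dg (-b) a.
Proof.
move=> ha hb hm.
have [a1 a2 a3 a4] := SmatE m; have [d1 d2 d3 d4] := formE a 0 b;
have [e1 e2 e3 e4] := formE (-b) 0 a.
apply: mx2P; rewrite !mul2E !absmxE /dg ?d1 ?d2 ?d3 ?d4 ?e1 ?e2 ?e3 ?e4 ?a1 ?a2 ?a3 ?a4 /=;
  rewrite ?normrN ?normr0 ?normr1; try ring.
have bb : b * b = 1 by nia.
transitivity (b * (a * b * `|m|)); first by rewrite -hm; ring.
transitivity ((b * b) * a * `|m|); first by ring.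
by rewrite bb; ring.
Qed.

Lemma neg_step a b m : `|a| = 1 -> `|b| = 1 -> m = - (a * b) * `|m| ->
  Sinv m *m dg a b = dg (-b) a *m absmx (Sinv m).
Proof.
move=> ha hb hm.
have [a1 a2 a3 a4] := SinvE m; have [d1 d2 d3 d4] := formE a 0 b;
have [e1 e2 e3 e4] := formE (-b) 0 a.
apply: mx2P; rewrite !mul2E !absmxE /dg ?d1 ?d2 ?d3 ?d4 ?e1 ?e2 ?e3 ?e4 ?a1 ?a2 ?a3 ?a4 /=;
  rewrite ?normrN ?normr0 ?normr1; try ring.
have aa : a * a = 1 by nia.
transitivity ((- (a * b) * `|m|) * a); first by rewrite -hm; ring.
transitivity (- (a * a) * b * `|m|); first by ring.
by rewrite aa; ring.
Qed.


Lemma iotaS1 j : iota 1 j.+1 = rcons (iota 1 j) j.+1.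
Proof. by rewrite -cats1 -(addn1 j) iotaD /= add1n addn1. Qed.

Lemma prod_iotaS (F : nat -> 'M[int]_2) j :
  \prod_(i <- iota 1 j.+1) F i = (\prod_(i <- iota 1 j) F i) * F j.+1.
Proof. by rewrite iotaS1 -cats1 big_cat big_seq1. Qed.

Lemma prod_rev_iotaS (F : nat -> 'M[int]_2) j :
  \prod_(i <- rev (iota 1 j.+1)) F i = F j.+1 * \prod_(i <- rev (iota 1 j)) F i.
Proof. by rewrite iotaS1 rev_rcons big_cons. Qed.

Definition nonneg (M : 'M[int]_2) := forall i k, 0 <= M i k.

Lemma nonneg_prod (s : seq nat) (F : nat -> 'M[int]_2) :
  (forall i, nonneg (F i)) -> nonneg (\prod_(i <- s) F i).
Proof.
move=> hF; apply: (big_ind nonneg).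
- by move=> i k; rewrite mxE; case: (i == k).
- move=> A B hA hB i k; rewrite -mulmxE mul2E.
  by apply: addr_ge0; apply: mulr_ge0.
- by move=> i _; apply: hF.
Qed.

Lemma nonneg_abs M : nonneg (absmx M).
Proof. by move=> i k; rewrite absmxE. Qed.

Lemma dgE a b : [/\ dg a b 0 0 = a, dg a b 0 1 = 0, dg a b 1 0 = 0 & dg a b 1 1 = b].
Proof. by rewrite /dg !mxE. Qed.

Lemma mul_dgE (P : 'M[int]_2) a b i :
  (P *m dg a b) i 0 = P i 0 * a /\ (P *m dg a b) i 1 = P i 1 * b.
Proof.
have [d1 d2 d3 d4] := dgE a b.
by rewrite !mul2E d1 d2 d3 d4 !mulr0 addr0 add0r.
Qed.

Lemma dg_mulE (P : 'M[int]_2) a b k :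
  (dg a b *m P) 0 k = a * P 0 k /\ (dg a b *m P) 1 k = b * P 1 k.
Proof.
have [d1 d2 d3 d4] := dgE a b.
by rewrite !mul2E d1 d2 d3 d4 !mul0r addr0 add0r.
Qed.

Lemma dg11 : dg 1 1 = 1.
Proof.
have [d1 d2 d3 d4] := dgE 1 1; have [o1 o2 o3 o4] := oneE.
by apply: mx2P; rewrite ?d1 ?d2 ?d3 ?d4 ?o1 ?o2 ?o3 ?o4.
Qed.

Lemma abs_dg_r (P : 'M[int]_2) a b : nonneg P -> `|a| = 1 -> `|b| = 1 ->
  absmx (P *m dg a b) = P.
Proof.
move=> hP ha hb; apply: mx2P; rewrite !absmxE;
  have [e1 e2] := mul_dgE P a b 0; have [e3 e4] := mul_dgE P a b 1;
  rewrite ?e1 ?e2 ?e3 ?e4 normrM ?ha ?hb mulr1 ger0_norm //.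
Qed.

Lemma abs_dg_l (P : 'M[int]_2) a b : nonneg P -> `|a| = 1 -> `|b| = 1 ->
  absmx (dg a b *m P) = P.
Proof.
move=> hP ha hb; apply: mx2P; rewrite !absmxE;
  have [e1 e2] := dg_mulE P a b 0; have [e3 e4] := dg_mulE P a b 1;
  rewrite ?e1 ?e2 ?e3 ?e4 normrM ?ha ?hb mul1r ger0_norm //.
Qed.

Section Pos.
Variable mu : nat -> int.
Hypothesis hmu : forall k, (0 < k)%N -> mu k = (-1) ^+ k.-1 * `|mu k|.

Definition Lpos j := \prod_(i <- iota 1 j) Smat (mu i).
Definition Ppos j := \prod_(i <- iota 1 j) absmx (Smat (mu i)).

Lemma Lpos_dec j : Lpos j = Ppos j *m dg (sgv (1,1) j).1 (sgv (1,1) j).2.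
Proof.
elim: j => [|j IH].
  by rewrite /Lpos /Ppos !big_nil /= dg11 mulmx1.
rewrite /Lpos /Ppos !prod_iotaS -/(Lpos j) -/(Ppos j) IH -!mulmxE -mulmxA.
have [n1 n2] := sgv_norm (1,1) j (normr1 _) (normr1 _).
rewrite pos_step //; first by rewrite mulmxA /sgv iterS.
by rewrite sgv_prod /= mulr1 {1}(hmu j.+1 isT) mulr1.
Qed.
End Pos.


Lemma odd_par (idx i : nat) (q h : int) : (Posz idx) = - Posz i - q * (2 * h) ->
  odd idx = odd i.
Proof.
move=> E. set t := q * h.
have E' : Posz idx = - Posz i - 2 * t by rewrite E /t; ring.
clearbody t. have : (idx %% 2 = i %% 2)%N by lia.
by rewrite !modn2; case: (odd idx); case: (odd i).
Qed.

Section Neg.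
Variable mu : nat -> int.
Variable N : nat.
Hypothesis hmu : forall k, (0 < k)%N -> mu k = (-1) ^+ k.-1 * `|mu k|.
Hypothesis hN : (0 < N)%N.
Hypothesis hNe : ~~ odd N.

Definition idx (i : nat) := absz (((- (i%:Z) - 1) %% N%:Z)%Z + 1).

Lemma idx_facts i : (0 < idx i)%N /\ odd (idx i) = odd i.
Proof.
have N0 : N%:Z != 0 by rewrite eqz_nat -lt0n.
have r0 := modz_ge0 (- (i%:Z) - 1) N0.
have E := divz_eq (- (i%:Z) - 1) N%:Z.
set r := ((- (i%:Z) - 1) %% N%:Z)%Z in r0 E *.
set q := ((- (i%:Z) - 1) %/ N%:Z)%Z in E.
have idxE : Posz (idx i) = r + 1 by rewrite /idx -/r; lia.
split; first by lia.
have NE : N = (N./2).*2 by rewrite -[N in LHS](odd_double_half N) (negbTE hNe) add0n.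
apply: (@odd_par _ _ q (N./2)%:Z).
have NZ : N%:Z = 2 * (N./2)%:Z by rewrite {1}NE -muln2 PoszM mulrC.
rewrite NZ in E; rewrite idxE.
move: E; set t := q * (2 * (N./2)%:Z) => E; lia.
Qed.

Lemma Sz_neg i : (0 < i)%N -> Sz mu N (- i%:Z) = Sinv (mu (idx i)).
Proof.
move=> i0; rewrite /Sz.
have -> : (0 < - i%:Z) = false by apply/negbTE; rewrite -leNgt oppr_le0.
by rewrite invSmat.
Qed.

Definition Lneg j := \prod_(i <- rev (iota 1 j)) Sinv (mu (idx i)).
Definition Pneg j := \prod_(i <- rev (iota 1 j)) absmx (Sinv (mu (idx i))).

Lemma Lneg_dec j :
  Lneg j = dg (sgv (1,-1) j).1 (sgv (1,-1) j).2 *m Pneg j *m dg 1 (-1).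
Proof.
elim: j => [|j IH].
  rewrite /Lneg /Pneg !big_nil /= mulmx1.
  have [d1 d2 d3 d4] := dgE 1 (-1); have [o1 o2 o3 o4] := oneE.
  by apply: mx2P; rewrite !mul2E ?d1 ?d2 ?d3 ?d4 ?o1 ?o2 ?o3 ?o4; ring.
rewrite /Lneg /Pneg !prod_rev_iotaS -/(Lneg j) -/(Pneg j) IH -!mulmxE !mulmxA.
have [n1 n2] := sgv_norm (1,-1) j (normr1 _) (normrN1 _).
rewrite neg_step //.
have [ip io] := idx_facts j.+1.
rewrite sgv_prod /= {1}(hmu _ ip) mulrN1 opprK.
congr (_ * _); rewrite -signr_odd -[in RHS]signr_odd; congr (_ ^+ _).
by move: ip io; case: (idx j.+1) => //= n _; case: (odd n); case: (odd j).
Qed.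
End Neg.


Definition Inv (K x y z w : int) := 1 <= x /\ x <= y /\ x <= z /\ z <= w /\ y <= w /\
  z <= K * x /\ w <= K * y /\ y <= K * x.

Lemma inv_step K x y z w n : Inv K x y z w -> 1 <= n -> n + 1 <= K ->
  Inv K y (x + n * y) w (z + n * w).
Proof.
move=> [h1 [h2 [h3 [h4 [h5 [h6 [h7 h8]]]]]]] n1 nK.
split; first by lia.
split; first by nia.
split; first by lia.
split; first by nia.
split; first by nia.
split; first by lia.
split; first by nia.
nia.
Qed.

Lemma inv_base K n1 n2 : 1 <= n1 -> n1 + 1 <= K -> 1 <= n2 -> n2 + 1 <= K ->
  Inv K 1 n2 n1 (1 + n1 * n2).
Proof.
move=> a b c d.
split; first by lia.
split; first by lia.
split; first by lia.
split; first by nia.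
split; first by nia.
split; first by lia.
split; first by nia.
lia.
Qed.

Lemma absSmatE m : [/\ absmx (Smat m) 0 0 = 0, absmx (Smat m) 0 1 = 1,
  absmx (Smat m) 1 0 = 1 & absmx (Smat m) 1 1 = `|m|].
Proof. by rewrite !absmxE !mxE /= ?normrN ?normr1 ?normr0. Qed.

Lemma absSinvE m : [/\ absmx (Sinv m) 0 0 = `|m|, absmx (Sinv m) 0 1 = 1,
  absmx (Sinv m) 1 0 = 1 & absmx (Sinv m) 1 1 = 0].
Proof. by rewrite !absmxE !mxE /= ?normrN ?normr1 ?normr0. Qed.

Section Ratio.
Variable g : nat -> int.
Variable K : int.
Hypothesis hg : forall i, (0 < i)%N -> 1 <= `|g i| /\ `|g i| + 1 <= K.

Lemma pos_inv j : let P := \prod_(i <- iota 1 j.+2) absmx (Smat (g i)) in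
  Inv K (P 0 0) (P 0 1) (P 1 0) (P 1 1).
Proof.
elim: j => [|j IH].
  move=> P0; rewrite /P0 !big_cons big_nil mulr1 -mulmxE.
  have [a1 a2 a3 a4] := absSmatE (g 1%N); have [b1 b2 b3 b4] := absSmatE (g 2%N).
  rewrite !mul2E a1 a2 a3 a4 b1 b2 b3 b4.
  have [h1 h2] := hg 1%N isT; have [h3 h4] := hg 2%N isT.
  have := @inv_base K _ _ h1 h2 h3 h4.
  by rewrite /Inv; rewrite !mul0r !mul1r !mulr1 ?add0r ?addr0.
cbv zeta in IH; move=> P0; rewrite /P0 prod_iotaS -mulmxE.
set P := \prod_(i <- iota 1 j.+2) absmx (Smat (g i)) in IH *.
have [a1 a2 a3 a4] := absSmatE (g j.+3).
rewrite !mul2E a1 a2 a3 a4 !mulr0 !mulr1 !add0r.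
have [h1 h2] := hg j.+3 isT.
have := @inv_step _ _ _ _ _ _ IH h1 h2.
by rewrite [_ * P 0 1]mulrC [_ * P 1 1]mulrC.
Qed.

Lemma neg_inv j : let P := \prod_(i <- rev (iota 1 j.+2)) absmx (Sinv (g i)) in
  Inv K (P 1 1) (P 0 1) (P 1 0) (P 0 0).
Proof.
elim: j => [|j IH].
  move=> P0; rewrite /P0 !big_cons big_nil mulr1 -mulmxE.
  have [a1 a2 a3 a4] := absSinvE (g 1%N); have [b1 b2 b3 b4] := absSinvE (g 2%N).
  rewrite !mul2E a1 a2 a3 a4 b1 b2 b3 b4.
  have [h1 h2] := hg 1%N isT; have [h3 h4] := hg 2%N isT.
  have := @inv_base K _ _ h1 h2 h3 h4.
  rewrite /Inv !mul0r !mul1r !mulr1 ?add0r ?addr0 ?addr0.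
  by rewrite [`|g 2%N| * _]mulrC addrC.
cbv zeta in IH; move=> P0; rewrite /P0 prod_rev_iotaS -mulmxE.
set P := \prod_(i <- rev (iota 1 j.+2)) absmx (Sinv (g i)) in IH *.
have [a1 a2 a3 a4] := absSinvE (g j.+3).
rewrite !mul2E a1 a2 a3 a4 !mul0r !mul1r !addr0.
have [h1 h2] := hg j.+3 isT.
have := @inv_step _ _ _ _ _ _ IH h1 h2.
by rewrite [P 1 1 + _]addrC [P 1 0 + _]addrC.
Qed.
End Ratio.


Lemma rot4 (w : int * int) : iter 4 rotp w = w.
Proof. by case: w => a b; rewrite /rotp /= !opprK. Qed.

Lemma sgv_mod4 v j : sgv v j = sgv v (j %% 4).
Proof.
rewrite {1}(divn_eq j 4) /sgv addnC iterD.
elim: (j %/ 4)%N => [|q IH] //.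
by rewrite mulSn iterD rot4 IH.
Qed.

Lemma sign_entries (P : 'M[int]_2) a b : nonneg P ->
  let L := P *m dg a b in
  (a = 1 -> 0 <= L 0 0 /\ 0 <= L 1 0) /\ (a = -1 -> L 0 0 <= 0 /\ L 1 0 <= 0) /\
  (b = 1 -> 0 <= L 0 1 /\ 0 <= L 1 1) /\ (b = -1 -> L 0 1 <= 0 /\ L 1 1 <= 0).
Proof.
move=> nP /=.
have [e00 e01] := mul_dgE P a b 0; have [e10 e11] := mul_dgE P a b 1.
rewrite e00 e01 e10 e11.
have := nP 0 0; have := nP 0 1; have := nP 1 0; have := nP 1 1.
move=> h1 h2 h3 h4.
by do 3! (split; [move=> ->; rewrite ?mulr1 ?mulrN1 ?oppr_le0; split=> // |]);
  move=> ->; rewrite ?mulr1 ?mulrN1 ?oppr_le0.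
Qed.

Lemma abs_dg_lr (P : 'M[int]_2) a b c d : nonneg P -> `|a| = 1 -> `|b| = 1 ->
  `|c| = 1 -> `|d| = 1 -> absmx (dg a b *m P *m dg c d) = P.
Proof.
move=> hP ha hb hc hd.
set X := dg a b *m P.
have [x1 x2] := dg_mulE P a b 0; have [x3 x4] := dg_mulE P a b 1.
apply: mx2P; rewrite !absmxE;
  have [e1 e2] := mul_dgE X c d 0; have [e3 e4] := mul_dgE X c d 1;
  rewrite ?e1 ?e2 ?e3 ?e4 /X ?x1 ?x2 ?x3 ?x4 !normrM ?ha ?hb ?hc ?hd mulr1 mul1r ger0_norm //.
Qed.

Lemma maxabs_abs M : maxabs M = maxabs (absmx M).
Proof. by rewrite /maxabs !absmxE !normr_id. Qed.
Lemma minabs_abs M : minabs M = minabs (absmx M).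
Proof. by rewrite /minabs !absmxE !normr_id. Qed.

Lemma mm_pos K (P : 'M[int]_2) : Inv K (P 0 0) (P 0 1) (P 1 0) (P 1 1) ->
  maxabs P = P 1 1 /\ minabs P = P 0 0.
Proof. rewrite /Inv /maxabs /minabs; set x := P 0 0; set y := P 0 1;
  set z := P 1 0; set w := P 1 1; move=> h; split; lia. Qed.

Lemma mm_neg K (P : 'M[int]_2) : Inv K (P 1 1) (P 0 1) (P 1 0) (P 0 0) ->
  maxabs P = P 0 0 /\ minabs P = P 1 1.
Proof. rewrite /Inv /maxabs /minabs; set x := P 1 1; set y := P 0 1;
  set z := P 1 0; set w := P 0 0; move=> h; split; lia. Qed.

Lemma ratio_bound D x y z w : (0 < D)%N -> (forall m : nat, (m ^ 2)%N != D) ->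
  Inv (2 * lam D + 1) x y z w ->
  1 <= (w%:~R : Rdefinitions.R) / x%:~R /\
  (w%:~R : Rdefinitions.R) / x%:~R <= 4 * (D%:R + sqrtD D).
Proof.
move=> D0 nsq [h1 [h2 [h3 [h4 [h5 [h6 [h7 h8]]]]]]].
have [s0 [s2 [l1 [ls [sl l2]]]]] := sfacts _ D0 nsq.
have wx : w <= (2 * lam D + 1) * ((2 * lam D + 1) * x) by nia.
have Dl : lam D * lam D + 1 <= D%:Z by move: l2; rewrite expr2; lia.
have x0 : (0 : Rdefinitions.R) < x%:~R by rewrite ltr0z; lia.
rewrite ler_pdivlMr // ler_pdivrMr // mul1r.
split; first by rewrite ler_int; lia.
have wxR : (w%:~R : Rdefinitions.R) <= ((2 * lam D + 1) * ((2 * lam D + 1) * x))%:~R.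
  by rewrite ler_int.
have DlR : ((lam D * lam D + 1)%:~R : Rdefinitions.R) <= (D%:Z)%:~R by rewrite ler_int.
move: wxR DlR; rewrite !intrM !intrD !intrM /=.
have -> : ((2 : int)%:~R : Rdefinitions.R) = 2 by [].
have -> : ((1 : int)%:~R : Rdefinitions.R) = 1 by [].
have l1R : (1 : Rdefinitions.R) <= (lam D)%:~R by rewrite ler1z.
change (D%:R : Rdefinitions.R) with ((D%:Z)%:~R : Rdefinitions.R).
move=> wxR DlR; nra.
Qed.


Lemma Sz_pos mu N i : (0 < i)%N -> Sz mu N i%:Z = Smat (mu i).
Proof. by move=> i0; rewrite /Sz ltz_nat i0. Qed.

Lemma Lz_posE mu N j : (0 < j)%N -> Lz mu N j%:Z = Lpos mu j.
Proof.
move=> j0; rewrite /Lz ltz_nat j0 /=.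
by apply: eq_big_seq => i; rewrite mem_iota => /andP [i1 _]; rewrite Sz_pos.
Qed.

Lemma RHS_pos mu N j :
  \prod_(i <- iota 1 j) absmx (Sz mu N i%:Z) = Ppos mu j.
Proof.
by apply: eq_big_seq => i; rewrite mem_iota => /andP [i1 _]; rewrite Sz_pos.
Qed.

Lemma Lz_negE mu N j : (0 < j)%N -> Lz mu N (- j%:Z) = Lneg mu N j.
Proof.
move=> j0; rewrite /Lz.
have -> : (0 < - j%:Z) = false by apply/negbTE; rewrite -leNgt oppr_le0.
have -> : (- j%:Z == 0) = false by rewrite oppr_eq0 eqz_nat; case: (j) j0.
rewrite abszN /=.
by apply: eq_big_seq => i; rewrite mem_rev mem_iota => /andP [i1 _]; rewrite Sz_neg.
Qed.

Lemma RHS_neg mu N j :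
  \prod_(i <- rev (iota 1 j)) absmx (Sz mu N (- i%:Z)) = Pneg mu N j.
Proof.
by apply: eq_big_seq => i; rewrite mem_rev mem_iota => /andP [i1 _]; rewrite Sz_neg.
Qed.

Theorem lemma5p2 (D : nat) (Q : nat -> 'M[int]_2) (mu : nat -> int) (N : nat) :
  (0 < D)%N ->
  (forall m : nat, (m ^ 2)%N != D) ->
  principal_cycle D Q mu ->
  least_period Q N ->
  (* (i) sign patterns *)
  (forall j : nat, (0 < j)%N ->
     let L := Lz mu N j%:Z in
     ((j %% 4 = 0)%N ->
        0 <= L 0 0 /\ 0 <= L 0 1 /\ 0 <= L 1 0 /\ 0 <= L 1 1) /\
     ((j %% 4 = 1)%N ->
        L 0 0 <= 0 /\ 0 <= L 0 1 /\ L 1 0 <= 0 /\ 0 <= L 1 1) /\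
     ((j %% 4 = 2)%N ->
        L 0 0 <= 0 /\ L 0 1 <= 0 /\ L 1 0 <= 0 /\ L 1 1 <= 0) /\
     ((j %% 4 = 3)%N ->
        0 <= L 0 0 /\ L 0 1 <= 0 /\ 0 <= L 1 0 /\ L 1 1 <= 0)) /\
  (* (ii) *)
  (forall j : nat, (0 < j)%N ->
     absmx (Lz mu N j%:Z) = \prod_(i <- iota 1 j) absmx (Sz mu N i%:Z) /\
     absmx (Lz mu N (- j%:Z)) =
       \prod_(i <- rev (iota 1 j)) absmx (Sz mu N (- i%:Z))) /\
  (* (iii) *)
  (forall j : int, 2 <= `|j| ->
     let L := Lz mu N j in
     let ratio : Rdefinitions.R := (maxabs L)%:~R / (minabs L)%:~R in
     1 <= ratio /\ ratio <= 4 * (D%:R + sqrtD D)).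
Proof.
move=> D0 nsq PC LP.
have mf := @mu_facts D Q mu D0 nsq PC.
have hmu : forall k, (0 < k)%N -> mu k = (-1) ^+ k.-1 * `|mu k|.
  move=> k k0; have := mf k k0; case: k k0 => // k _ /=.
  rewrite -signr_odd; case: (odd k) => /= /andP [h1 h2];
    rewrite ?expr0 ?expr1; lia.
have hg : forall i, (0 < i)%N -> 1 <= `|mu i| /\ `|mu i| + 1 <= 2 * lam D + 1.
  move=> i i0; have := mf i i0; case: (odd i) => /andP [h1 h2]; split; lia.
have hg' : forall i, (0 < i)%N ->
    1 <= `|(mu \o idx N) i| /\ `|(mu \o idx N) i| + 1 <= 2 * lam D + 1.
  by move=> i _; apply: hg; have [] := idx_facts N (proj1 LP) (@N_even D Q mu N D0 nsq PC LP) i.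
have N0 := proj1 LP.
have Ne := @N_even D Q mu N D0 nsq PC LP.
have absP : forall j, (0 < j)%N -> absmx (Lz mu N j%:Z) = Ppos mu j.
  move=> j j0; rewrite Lz_posE // Lpos_dec //.
  have [a1 a2] := sgv_norm (1,1) j (normr1 _) (normr1 _).
  apply: abs_dg_r => //; apply: nonneg_prod => i; exact: nonneg_abs.
have absN : forall j, (0 < j)%N -> absmx (Lz mu N (- j%:Z)) = Pneg mu N j.
  move=> j j0; rewrite Lz_negE // Lneg_dec //.
  have [a1 a2] := sgv_norm (1,-1) j (normr1 _) (normrN1 _).
  apply: abs_dg_lr => //; rewrite ?normr1 ?normrN1 //.
  apply: nonneg_prod => i; exact: nonneg_abs.
split.
  move=> j j0 /=; rewrite Lz_posE // Lpos_dec //.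
  have nP : nonneg (Ppos mu j) by apply: nonneg_prod => i; exact: nonneg_abs.
  move: (ltn_pmod j (isT : (0 < 4)%N)); rewrite (sgv_mod4 _ j).
  have SE := @sign_entries (Ppos mu j) (sgv (1,1) (j %% 4)).1 (sgv (1,1) (j %% 4)).2 nP.
  case: (j %% 4)%N SE => [|[|[|[|r]]]] // SE _; move: SE; rewrite /sgv /= ?opprK;
    move=> [s1 [s2 [s3 s4]]];
    try (have [? ?] := s1 erefl); try (have [? ?] := s2 erefl);
    try (have [? ?] := s3 erefl); try (have [? ?] := s4 erefl);
    (split; [|split; [|split]]); move=> h; try discriminate h; by do !split.
split.
  move=> j j0; split; first by rewrite absP // RHS_pos.
  by rewrite absN // RHS_neg.
move=> j hj /=; rewrite maxabs_abs minabs_abs.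
case: j hj => n hn.
  have n2 : (2 <= n)%N by move: hn; rewrite ger0_norm // lez_nat.
  case: n n2 hn => [|[|k]] // _ _.
  rewrite absP //.
  have I := @pos_inv mu (2 * lam D + 1) hg k; cbv zeta in I.
  have [mx mn] : (maxabs (Ppos mu k.+2) = (Ppos mu k.+2) 1 1) /\ (minabs (Ppos mu k.+2) = (Ppos mu k.+2) 0 0) by exact: (@mm_pos _ _ I).
  rewrite mx mn; exact: (@ratio_bound D _ _ _ _ D0 nsq I).
have n1 : (1 <= n)%N by move: hn; rewrite NegzE normrN ger0_norm // lez_nat.
case: n n1 hn => [|k] // _ _.
rewrite NegzE absN //.
have I := @neg_inv (mu \o idx N) (2 * lam D + 1) hg' k; cbv zeta in I.
have [mx mn] : (maxabs (Pneg mu N k.+2) = (Pneg mu N k.+2) 0 0) /\ (minabs (Pneg mu N k.+2) = (Pneg mu N k.+2) 1 1) by exact: (@mm_neg _ _ I).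
rewrite mx mn; exact: (@ratio_bound D _ _ _ _ D0 nsq I).
Qed.
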